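(* Let $G=(V,E)$ be a block graph with $n=|V|\ge 2$ vertices, consisting of $r$ blocks whose numbers of vertices are $P_1,\dots,P_r$, and set $$\lambda_G=\sum_{i=1}^r \frac{P_i-1}{P_i}.$$ For a vertex $x\in V$ contained in exactly $s$ blocks, labeled $i_1,\dots,i_s$, set $$\beta_x=\Big(\sum_{j=1}^s \frac{1}{P_{i_j}}\Big)-(s-1).$$ Then the equation $DK=n\mathbf{1}_n$ has a unique solution $K$, and hence the Steinerberger curvature of every vertex $x\in V$ is $$K(x)=\frac{|V|\,\beta_x}{\lambda_G}.$$
   Context: All graphs are finite, simple, connected and undirected, with the combinatorial shortest-path distance $d$. For $G=(V,E)$ with $V=\{v_1,\dots,v_n\}$, let $D=(d(v_i,v_j))_{i,j=1}^n$ be its distance matrix and $\mathbf{1}_n\in\mathbb{R}^n$ the all-ones column vector. The Steinerberger curvature $K\in\mathbb{R}^n$ (written $K_i$ or $K(v_i)$) is defined as follows: if $DK=n\mathbf{1}_n$ has a unique solution, $K$ is that solution; if it has several solutions, $K$ is a solution for which $\min_i K_i$ is maximal; if it has no solution, $K=nD^\dagger\mathbf{1}_n$ with $D^\dagger$ the Moore–Penrose pseudoinverse. A block of a graph is a maximal connected subgraph without a cut vertex (maximal 2-connected subgraph; in particular a bridge together with its endpoints is a block). A block graph is a connected graph all of whose blocks are complete graphs (cliques). *)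

(* Defs.v *)
From HB Require Import structures.
From mathcomp Require Import all_boot all_order all_algebra.
Set Implicit Arguments. Unset Strict Implicit. Unset Printing Implicit Defensive.
Import Order.TTheory GRing.Theory Num.Theory.
Local Open Scope ring_scope.

(* A finite simple graph: vertex type T : finType, edge relation e : rel T,
   assumed symmetric and irreflexive in the theorem. *)
Section Graph.
Variables (T : finType) (e : rel T).

Definition walk_of_len (k : nat) (x y : T) : bool :=
  [exists p : k.-tuple T, path e x p && (last x p == y)].

(* Combinatorial shortest-path distance (for a connected graph every
   distance is < #|T|, so searching k in 0..#|T|-1 is exhaustive). *)
Definition dist (x y : T) : nat :=
  find (fun k => walk_of_len k x y) (iota 0 #|T|).

Definition induced (B : {set T}) : rel T :=
  fun u v => [&& u \in B, v \in B & e u v].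

(* The subgraph induced on B is connected (the empty graph counts as connected). *)
Definition induced_connected (B : {set T}) : bool :=
  [forall x in B, forall y in B, connect (induced B) x y].

Definition no_cut_connected (B : {set T}) : bool :=
  [&& B != set0, induced_connected B &
      [forall v in B, induced_connected (B :\ v)]].

(* A block: maximal connected subgraph without a cut vertex
   (maximal connected subgraphs without cut vertex are induced). *)
Definition is_block (B : {set T}) : bool := maxset no_cut_connected B.

Definition is_clique (B : {set T}) : bool :=
  [forall x in B, forall y in B, (x != y) ==> e x y].

Definition block_graph : Prop := forall B : {set T}, is_block B -> is_clique B.

Definition connected_graph : Prop := forall x y : T, connect e x y.

Definition distmx (R : nzRingType) : 'M[R]_#|T| :=
  \matrix_(i, j) (dist (enum_val i) (enum_val j))%:R.

Definition lambdaG (R : fieldType) : R :=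
  \sum_(B : {set T} | is_block B) ((#|B|%:R - 1) / #|B|%:R).

Definition betaG (R : fieldType) (x : T) : R :=
  (\sum_(B : {set T} | is_block B && (x \in B)) (#|B|%:R)^-1)
  - (#|[set B : {set T} | is_block B && (x \in B)]|%:R - 1).

End Graph.

(* Main.v *)
Require Import Defs.
From HB Require Import structures.
From mathcomp Require Import all_boot all_order all_algebra.
From mathcomp Require Import ring.
Import Order.TTheory GRing.Theory Num.Theory.
Set Implicit Arguments. Unset Strict Implicit. Unset Printing Implicit Defensive.

Section Dist.
Variables (T : finType) (e : rel T).
Hypothesis e_sym : symmetric e.
Hypothesis e_irr : irreflexive e.
Hypothesis e_conn : connected_graph e.

Lemma walkP k x y : reflect (exists p : seq T, [/\ size p = k, path e x p & last x p = y])
  (walk_of_len e k x y).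
Proof.
apply: (iffP existsP) => [[p /andP[pp /eqP lp]]|[p [sp pp lp]]].
  by exists p; rewrite size_tuple.
have tp : size p == k by apply/eqP.
by exists (Tuple tp); rewrite /= pp lp eqxx.
Qed.

Lemma walk_short x y : exists k, (k < #|T|)%N /\ walk_of_len e k x y.
Proof.
have /connectP[p pp ->] := e_conn x y.
case: (shortenP pp) => p' pp' up' _.
exists (size p'); split; last by apply/walkP; exists p'.
move/card_uniqP: up' => h; have := max_card (mem (x :: p')); by rewrite h.
Qed.

Lemma dist_lt x y : (dist e x y < #|T|)%N.
Proof.
case: (walk_short x y) => k [kl wk].
rewrite /dist -[X in (_ < X)%N](size_iota 0) -has_find; apply/hasP.
by exists k; rewrite ?mem_iota.
Qed.

Lemma dist_walk x y : walk_of_len e (dist e x y) x y.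
Proof.
have := dist_lt x y; rewrite /dist -[X in (_ < X)%N](size_iota 0) => h.
rewrite -has_find in h; have := nth_find 0 h.
rewrite nth_iota ?add0n //; exact: dist_lt.
Qed.

Lemma dist_min k x y : walk_of_len e k x y -> (dist e x y <= k)%N.
Proof.
move=> wk; case: (ltnP k #|T|) => kl; last first.
  by apply: ltnW; apply: leq_trans (dist_lt x y) kl.
rewrite leqNgt; apply/negP => hk.
have := before_find 0 hk; rewrite nth_iota //.
by rewrite add0n wk.
Qed.

Lemma distP x y : exists p : seq T, [/\ size p = dist e x y, path e x p & last x p = y].
Proof. exact/walkP/dist_walk. Qed.

Lemma dist_le x y p : path e x p -> last x p = y -> (dist e x y <= size p)%N.
Proof. by move=> pp lp; apply: dist_min; apply/walkP; exists p. Qed.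

Lemma dist_xx x : dist e x x = 0%N.
Proof. by apply/eqP; rewrite -leqn0; exact: (@dist_le x x [::]). Qed.

Lemma dist0 x y : dist e x y = 0%N -> x = y.
Proof. by move=> d; case: (distP x y) => [[|a p]] [/= s _ l] //; rewrite d in s. Qed.

Lemma dist_sym x y : dist e x y = dist e y x.
Proof.
suff h : forall a b, (dist e a b <= dist e b a)%N by apply/eqP; rewrite eqn_leq !h.
move=> a b; case: (distP b a) => p [sp pp lp].
have : path e (last b p) (rev (belast b p)).
  by rewrite rev_path; apply: sub_path pp => u v; rewrite e_sym.
rewrite lp => h; rewrite -sp; have := dist_le h.
have -> : last a (rev (belast b p)) = b.
  case: p {sp pp h} lp => [/= -> //|c p _]; by rewrite /= rev_cons last_rcons.
by rewrite size_rev size_belast; apply.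
Qed.

Lemma dist_edge x y : e x y -> dist e x y = 1%N.
Proof.
move=> exy; apply/eqP; rewrite eqn_leq (@dist_le x y [:: y]) /= ?exy //.
rewrite lt0n; apply/eqP => /dist0 h; subst; by rewrite e_irr in exy.
Qed.

Lemma dist_step x y z : e y z -> (dist e x z <= (dist e x y).+1)%N.
Proof.
move=> eyz; case: (distP x y) => p [sp pp lp].
have := @dist_le x z (rcons p z); rewrite size_rcons sp; apply.
  by rewrite rcons_path pp lp eyz.
by rewrite last_rcons.
Qed.

Lemma dist_parent x y k : dist e x y = k.+1 -> exists2 p, e p y & dist e x p = k.
Proof.
move=> dk; case: (distP x y) => p [sp pp lp].
case/lastP: p sp pp lp => [|p a]; first by rewrite dk.
rewrite size_rcons rcons_path last_rcons dk => -[sp] /andP[pp ea] ay; subst y.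
exists (last x p) => //; apply/eqP; rewrite eqn_leq -{1}sp (@dist_le x (last x p) p pp erefl) /=.
have := dist_step x ea; rewrite dk ltnS.
by [].
Qed.


Lemma induced_sym (S : {set T}) : symmetric (induced e S).
Proof. by move=> u v; rewrite /induced e_sym andbCA. Qed.

Lemma ic_path (S : {set T}) a s : path e a s -> (forall y, (y \in S) = (y \in a :: s)) ->
  induced_connected e S.
Proof.
move=> pp hS.
have pi : path (induced e S) a s.
  have : all (mem S) (a :: s) by apply/allP => y ys; rewrite inE hS.
  elim: s a pp {hS} => //= b s IH a /andP[eab pb] /and3P[aS bS as_].
  by rewrite /induced aS bS eab /= IH //= bS.
have hc : forall y, y \in S -> connect (induced e S) a y.
  by move=> y; rewrite hS; apply: path_connect.
apply/forallP => x; apply/implyP => xS; apply/forallP => y; apply/implyP => yS.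
apply: connect_trans (hc _ yS).
by rewrite (sym_connect_sym (@induced_sym S)) hc.
Qed.

Lemma clique_sub (A B : {set T}) : is_clique e B -> A \subset B -> is_clique e A.
Proof.
move=> cB sAB; apply/forallP => x; apply/implyP => xA; apply/forallP => y; apply/implyP => yA.
by have := forallP cB x; rewrite (subsetP sAB _ xA) => /= /forallP /(_ y); rewrite (subsetP sAB _ yA).
Qed.

Lemma cliqueP (B : {set T}) : is_clique e B -> forall x y, x \in B -> y \in B -> x != y -> e x y.
Proof.
by move=> cB x y xB yB; have := forallP cB x; rewrite xB => /= /forallP /(_ y); rewrite yB => /= /implyP.
Qed.

Lemma clique_ic (B : {set T}) : is_clique e B -> induced_connected e B.
Proof.
move=> cB; apply/forallP => x; apply/implyP => xB; apply/forallP => y; apply/implyP => yB.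
case: (eqVneq x y) => [->|nxy]; first exact: connect0.
by apply: connect1; rewrite /induced xB yB (cliqueP cB).
Qed.

Lemma clique_ncc (B : {set T}) : B != set0 -> is_clique e B -> no_cut_connected e B.
Proof.
move=> ne cB; rewrite /no_cut_connected ne clique_ic //=.
apply/forallP => v; apply/implyP => _; apply: clique_ic; apply: clique_sub cB _.
exact: subsetDl.
Qed.

Hypothesis e_block : block_graph e.

Lemma ncc_block (S : {set T}) : no_cut_connected e S -> exists2 B, is_block e B & S \subset B.
Proof. by move=> h; case: (maxset_exists h) => B mB sSB; exists B. Qed.

Lemma ncc_clique (S : {set T}) : no_cut_connected e S -> is_clique e S.
Proof. by case/ncc_block => B /e_block cB sSB; apply: clique_sub sSB. Qed.

Lemma block_ne (B : {set T}) : is_block e B -> B != set0.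
Proof. by move/maxsetp; case/and3P. Qed.

Lemma block_max (B D : {set T}) : is_block e B -> is_clique e D -> B \subset D -> D = B.
Proof.
move=> bB cD sBD; apply: (maxsetsup bB) => //; apply: clique_ncc cD.
apply: contraNneq (block_ne bB) => D0; by rewrite -subset0 -D0.
Qed.

Lemma block_add (B : {set T}) w : is_block e B -> (forall b, b \in B -> b != w -> e w b) -> w \in B.
Proof.
move=> bB h; have cB := e_block bB.
have cD : is_clique e (w |: B).
  apply/forallP => x; apply/implyP; rewrite in_setU1 => hx; apply/forallP => y; apply/implyP.
  rewrite in_setU1 => hy; apply/implyP => nxy.
  case/orP: hx => [/eqP xw|xB]; case/orP: hy => [/eqP yw|yB].
  - by rewrite xw yw eqxx in nxy.
  - by rewrite xw h // -xw eq_sym.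
  - by rewrite yw e_sym h // -yw.
  - exact: (cliqueP cB).
have := block_max bB cD (subsetUr _ _) => <-; exact: setU11.
Qed.

Lemma edge_block u v : e u v -> exists2 B, is_block e B & (u \in B) && (v \in B).
Proof.
move=> euv; have : no_cut_connected e [set u; v].
  apply: clique_ncc; first by apply/set0Pn; exists u; rewrite !inE eqxx.
  apply/forallP => x; apply/implyP; rewrite !inE => hx; apply/forallP => y; apply/implyP.
  rewrite !inE => hy; apply/implyP => nxy.
  by case/orP: hx hy nxy => /eqP-> /orP[] /eqP->; rewrite ?eqxx // e_sym.
case/ncc_block => B bB sB; exists B => //.
by rewrite !(subsetP sB) // !inE eqxx ?orbT.
Qed.

Lemma cycle_clique (c : seq T) : uniq c -> cycle e c -> c != [::] -> is_clique e [set x in c].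
Proof.
move=> uc cc nc; apply: ncc_clique.
rewrite /no_cut_connected; apply/and3P; split.
- by case: c nc {uc cc} => // a c _; apply/set0Pn; exists a; rewrite inE mem_head.
- case: c nc uc cc => // a s _ _ /=; rewrite rcons_path => /andP[pp _].
  by apply: (ic_path pp) => y; rewrite inE.
apply/forallP => v; apply/implyP; rewrite inE => vc.
case: (rot_to vc) => i s hr.
have uc' : uniq (v :: s) by rewrite -hr rot_uniq.
have cc' : cycle e (v :: s) by rewrite -hr rot_cycle.
have hm : forall y, (y \in [set x in c] :\ v) = (y \in s).
  move=> y; rewrite !inE -(mem_rot i) hr inE.
  case: (eqVneq y v) => [->|] //=; by case/andP: uc' => /negbTE ->.
case: s hr uc' cc' hm => [|b s] _ _ cc' hm.
  apply/forallP => x; apply/implyP; by rewrite hm.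
move: cc'; rewrite /= => /andP[_]; rewrite rcons_path => /andP[pp _].
exact: (ic_path pp).
Qed.


Lemma notin_gt k (l : seq T) x y : all (fun z => k < dist e x z)%N l -> dist e x y = k -> y \notin l.
Proof. by move=> h dy; apply/negP => /(allP h) /=; rewrite dy ltnn. Qed.

Lemma merge x m : forall p q s, p != q -> dist e x p = m -> dist e x q = m ->
  path e p (rcons s q) -> uniq (p :: rcons s q) -> all (fun y => m < dist e x y)%N s ->
  e p q /\ exists w, [/\ e w p, e w q & (dist e x w).+1 = m].
Proof.
elim: m => [|k IH] p q s npq dp dq pp up hs.
  by move: npq; rewrite -(dist0 dp) -(dist0 dq) eqxx.
have [p' ep' dp'] := dist_parent dp.
have [q' eq' dq'] := dist_parent dq.
have hL : all (fun z => k < dist e x z)%N (p :: rcons s q).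
  rewrite /= dp ltnSn /= all_rcons dq ltnSn /=.
  by apply: sub_all hs => z /= /ltnW.
have p'L := notin_gt hL dp'; have q'L := notin_gt hL dq'.
case: (eqVneq p' q') => [epq|npq'].
  subst q'.
  have cc : cycle e (p' :: p :: rcons s q).
    rewrite /= ep' /= -cats1 cat_path pp /= last_rcons andbT.
    by rewrite e_sym.
  have ucc : uniq (p' :: p :: rcons s q) by rewrite cons_uniq p'L up.
  have cl := cycle_clique ucc cc isT.
  split; last by exists p'; split => //; rewrite dp'.
  apply: (cliqueP cl) => //; rewrite !(inE, mem_rcons) eqxx ?orbT //.
have pp2 : path e p' (rcons (p :: rcons s q) q').
  by rewrite /= ep' /= -cats1 cat_path pp /= last_rcons andbT e_sym.
have up2 : uniq (p' :: rcons (p :: rcons s q) q').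
  rewrite cons_uniq rcons_uniq up andbT mem_rcons inE negb_or npq' p'L /=.
  exact: q'L.
have hs2 : all (fun y => k < dist e x y)%N (p :: rcons s q) by [].
have [epq' _] := IH p' q' (p :: rcons s q) npq' dp' dq' pp2 up2 hs2.
have cc : cycle e (p' :: rcons (p :: rcons s q) q').
  by rewrite /cycle rcons_path pp2 last_rcons e_sym.
have cl := cycle_clique up2 cc isT.
have mp : p \in [set z in p' :: rcons (p :: rcons s q) q'].
  by rewrite inE !(inE, mem_rcons) eqxx !orbT.
have mq : q \in [set z in p' :: rcons (p :: rcons s q) q'].
  by rewrite inE !(inE, mem_rcons) eqxx !orbT.
have mp' : p' \in [set z in p' :: rcons (p :: rcons s q) q'] by rewrite inE mem_head.
split; first exact: (cliqueP cl).
exists p'; split => //; last by rewrite dp'.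
apply: (cliqueP cl) => //; apply/eqP => h; move: p'L; by rewrite h inE mem_rcons mem_head orbT.
Qed.


Lemma level_lemma x y z : e y z -> dist e x y = dist e x z ->
  exists w, [/\ e w y, e w z & (dist e x w).+1 = dist e x y].
Proof.
move=> eyz dyz.
have nyz : y != z by apply: contraTneq eyz => ->; rewrite e_irr.
have H := @merge x (dist e x y) y z [::] nyz erefl (esym dyz).
case: H => //; first by rewrite /= eyz.
by rewrite /= inE andbT.
Qed.

Lemma parents_lemma x y c w : e c y -> e w y -> dist e x c = dist e x w ->
  (dist e x c).+1 = dist e x y -> c != w -> e c w.
Proof.
move=> ecy ewy dcw dcy ncw.
have h := @merge x (dist e x c) c w [:: y] ncw erefl (esym dcw).
apply: (h _ _ _).1.
- by rewrite /= ecy -(e_sym w y) ewy.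
- have ncy : c != y by apply: contraTneq ecy => ->; rewrite e_irr.
  have nyw : y != w by apply: contraTneq ewy => ->; rewrite e_irr.
  by rewrite /= !inE negb_or ncw ncy nyw.
- by rewrite /= -dcy ltnSn.
Qed.

Lemma uniq4 (a b c d : T) : a != b -> a != c -> a != d -> b != c -> b != d -> c != d ->
  uniq [:: a; b; c; d].
Proof. by move=> *; rewrite /= !inE !negb_or !andbT; repeat (apply/andP; split). Qed.

Lemma cyc4 a b c d : e a b -> e b c -> e c d -> e d a -> uniq [:: a; b; c; d] -> e a c.
Proof.
move=> eab ebc ecd eda u.
have cc : cycle e [:: a; b; c; d] by rewrite /= eab ebc ecd eda.
have cl := cycle_clique u cc isT.
apply: (cliqueP cl); rewrite ?inE ?eqxx ?orbT //.
by move: u; rewrite /= !inE !negb_or => /andP[/and3P[_ -> _] _].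
Qed.

Lemma block_uniq (B1 B2 : {set T}) u v : is_block e B1 -> is_block e B2 -> u != v ->
  u \in B1 -> v \in B1 -> u \in B2 -> v \in B2 -> B1 = B2.
Proof.
move=> b1 b2 nuv u1 v1 u2 v2.
have c1 := e_block b1; have c2 := e_block b2.
suff s21 : B2 \subset B1 by apply: (block_max b2 c1 s21).
apply/subsetP => w w2; apply: (block_add b1) => b bB1 nbw.
case: (boolP (w \in B1)) => [w1|w1]; first by apply: (cliqueP c1); rewrite // eq_sym.
case: (eqVneq b u) => [eb|nbu]; first by subst b; apply: (cliqueP c2); rewrite // eq_sym.
case: (eqVneq b v) => [eb|nbv]; first by subst b; apply: (cliqueP c2); rewrite // eq_sym.
have nwu : w != u by apply: contraNneq w1 => ->.
have nwv : w != v by apply: contraNneq w1 => ->.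
apply: (@cyc4 w u b v).
- exact: (cliqueP c2).
- by apply: (cliqueP c1); rewrite // eq_sym.
- exact: (cliqueP c1).
- by apply: (cliqueP c2); rewrite // eq_sym.
apply: uniq4 => //; by rewrite eq_sym.
Qed.

Lemma gate x (C : {set T}) : is_block e C ->
  exists2 g, g \in C & forall b, b \in C -> dist e x b = (dist e x g + (b != g))%N.
Proof.
move=> bC; have cC := e_block bC.
have /set0Pn [y0 y0C] := block_ne bC.
have [g gC gmin] := @arg_minnP _ y0 (mem C) (dist e x) y0C.
exists g => // b bbC; case: (eqVneq b g) => [->|nbg]; first by rewrite addn0.
have egb : e g b by apply: (cliqueP cC); rewrite // eq_sym.
have h1 := gmin b bbC; have h2 := dist_step x egb.
case: (ltngtP (dist e x g) (dist e x b)) h1 => // [lt|eq] _.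
  by apply/eqP; rewrite addn1 eqn_leq h2 lt.
exfalso; have [w [ewg ewb dw]] := level_lemma egb eq.
have wC : w \in C.
  apply: block_add => // c cc ncw.
  case: (eqVneq c g) => [->//|ncg]; case: (eqVneq c b) => [->//|ncb].
  have ecg : e c g by apply: (cliqueP cC).
  have nwg : w != g by apply: contraTneq ewg => ->; rewrite e_irr.
  have nwb : w != b by apply: contraTneq ewb => ->; rewrite e_irr.
  apply: (@cyc4 w g c b) => //.
  - by rewrite e_sym.
  - by apply: (cliqueP cC).
  - by rewrite e_sym.
  by apply: uniq4 => //; rewrite eq_sym.
by have := gmin w wC; rewrite -dw ltnn.
Qed.

Definition par x (C : {set T}) y := [exists c in C, dist e x c < dist e x y]%N.

Lemma par_gate x (C : {set T}) g y : g \in C ->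
  (forall b, b \in C -> dist e x b = (dist e x g + (b != g))%N) -> y \in C ->
  par x C y = (y != g).
Proof.
move=> gC hg yC; rewrite /par (hg y yC); case: (eqVneq y g) => [eyg|nyg] /=.
  apply/existsP => -[c /andP[cC]]; by rewrite (hg c cC) addn0 ltnNge leq_addr.
by apply/existsP; exists g; rewrite gC addn1 ltnSn.
Qed.

Lemma upb_ex x y : x != y -> exists2 C, is_block e C & (y \in C) && par x C y.
Proof.
move=> nxy; case hd : (dist e x y) => [|k]; first by rewrite (dist0 hd) eqxx in nxy.
have [p epy dp] := dist_parent hd.
have [C bC /andP[pC yC]] := edge_block epy.
exists C => //; rewrite yC /=; apply/existsP; exists p; by rewrite pC dp hd ltnSn.
Qed.

Lemma upb_uniq x y C1 C2 : is_block e C1 -> is_block e C2 -> y \in C1 -> y \in C2 ->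
  par x C1 y -> par x C2 y -> C1 = C2.
Proof.
move=> b1 b2 y1 y2 p1 p2.
have [g1 g1C h1] := gate x b1; have [g2 g2C h2] := gate x b2.
move: p1 p2; rewrite (par_gate g1C h1 y1) (par_gate g2C h2 y2) => n1 n2.
have d1 := h1 y y1; have d2 := h2 y y2; rewrite n1 addn1 in d1; rewrite n2 addn1 in d2.
have c1 := e_block b1; have c2 := e_block b2.
have e1 : e g1 y by apply: (cliqueP c1); rewrite // eq_sym.
have e2 : e g2 y by apply: (cliqueP c2); rewrite // eq_sym.
case: (eqVneq g1 g2) => [eg|ng].
  by subst g2; apply: (block_uniq b1 b2 n1 y1 g1C y2 g2C).
have eg12 : e g1 g2.
  apply: (@parents_lemma x y g1 g2 e1 e2 _ _ ng).
    by apply: succn_inj; rewrite -d1 -d2.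
  by rewrite -d1.
have g2C1 : g2 \in C1.
  apply: block_add => // b bC ngb.
  case: (eqVneq b g1) => [->|nbg1]; first by rewrite e_sym.
  case: (eqVneq b y) => [->//|nby].
  have ng2y : g2 != y by apply: contraTneq e2 => ->; rewrite e_irr.
  apply: (@cyc4 g2 g1 b y) => //.
  - by rewrite e_sym.
  - by apply: (cliqueP c1); rewrite // eq_sym.
  - by apply: (cliqueP c1).
  - by rewrite e_sym.
  by apply: uniq4 => //; rewrite eq_sym.
exact: (block_uniq b1 b2 n2 y1 g2C1 y2 g2C).
Qed.


Local Open Scope ring_scope.
Variable R : realFieldType.

Lemma sum_gate (F : T -> R) (C : {set T}) g c : g \in C ->
  (forall y, y \in C -> y != g -> F y = c) ->
  \sum_(y in C) F y = F g + (#|C|%:R - 1) * c.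
Proof.
move=> gC h; rewrite (bigD1 g) //=; congr (_ + _).
rewrite (eq_bigr (fun _ => c)); last by move=> y /andP[yC nyg]; apply: h.
rewrite sumr_const (cardD1 g C) gC natrD addrC addKr mulr_natl.
apply: congr1; apply: eq_card => y; by rewrite !inE andbC.
Qed.

Lemma card_block_neq0 (C : {set T}) : is_block e C -> (#|C|%:R : R) != 0.
Proof.
move=> bC; rewrite pnatr_eq0 -lt0n card_gt0; exact: block_ne.
Qed.

Lemma pbl w (C : {set T}) u : is_block e C -> u \in C ->
  (dist e w u)%:R - (\sum_(y in C) (dist e w y)%:R) / #|C|%:R
  = (par w C u)%:R + (#|C|%:R)^-1 - 1 :> R.
Proof.
move=> bC uC; have [g gC hg] := gate w bC.
rewrite (par_gate gC hg uC) (hg u uC).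
rewrite (@sum_gate (fun y => (dist e w y)%:R) C g (dist e w g + 1)%N%:R gC); last first.
  by move=> y yC nyg; rewrite (hg y yC) nyg.
have n0 := card_block_neq0 bC.
rewrite (hg g gC) eqxx addn0 !natrD.
set a : R := (dist e w g)%:R; set n : R := #|C|%:R.
by case: (u != g) => /=; field.
Qed.

Lemma pbd x (C : {set T}) : is_block e C ->
  \sum_(y in C) (dist e x y)%:R * ((par x C y)%:R + (#|C|%:R)^-1 - 1)
  = (#|C|%:R - 1) / #|C|%:R :> R.
Proof.
move=> bC; have [g gC hg] := gate x bC.
rewrite (@sum_gate _ C g (((dist e x g) + 1)%N%:R * (1 + (#|C|%:R)^-1 - 1)) gC).
  have n0 := card_block_neq0 bC.
  rewrite (par_gate gC hg gC) eqxx /= natrD.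
  set a : R := (dist e x g)%:R; set n : R := #|C|%:R.
  by field.
move=> y yC nyg; rewrite (par_gate gC hg yC) (hg y yC) nyg.
by [].
Qed.

Lemma upbR x y : \sum_(C : {set T} | is_block e C && (y \in C)) (par x C y)%:R = (x != y)%:R :> R.
Proof.
case: (eqVneq x y) => [<-|nxy].
  rewrite big1 // => C _; apply/eqP; rewrite pnatr_eq0 eqb0; apply/existsP => -[c].
  by rewrite dist_xx ltn0 andbF.
have [C0 b0 /andP[y0 p0]] := upb_ex nxy.
rewrite (bigD1 C0) ?b0 ?y0 //= p0 big1 ?addr0 // => C /andP[/andP[bC yC] nC].
case pC : (par x C y) => //.
by move: nC; rewrite (upb_uniq bC b0 yC y0 pC p0) eqxx.
Qed.

Lemma beta_alt y : betaG e R y = 1 + \sum_(C : {set T} | is_block e C && (y \in C)) ((#|C|%:R)^-1 - 1).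
Proof.
rewrite /betaG sumrB sumr_const cardsE.
by rewrite opprB addrCA.
Qed.


Lemma exch (P : pred {set T}) (G : T -> {set T} -> R) :
  \sum_y \sum_(C : {set T} | P C && (y \in C)) G y C = \sum_(C : {set T} | P C) \sum_(y in C) G y C.
Proof.
under eq_bigr do rewrite big_mkcondr.
rewrite exchange_big /=; apply: eq_bigr => C _; by rewrite [RHS]big_mkcond.
Qed.

Lemma dbeta x : \sum_y (dist e x y)%:R * betaG e R y = lambdaG e R.
Proof.
have E : forall y, (dist e x y)%:R * betaG e R y =
   \sum_(C : {set T} | is_block e C && (y \in C))
      (dist e x y)%:R * ((par x C y)%:R + (#|C|%:R)^-1 - 1).
  move=> y; rewrite beta_alt mulrDr.
  have -> : (dist e x y)%:R * 1 = (dist e x y)%:R * (x != y)%:R :> R.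
    case: (eqVneq x y) => [->|_]; by rewrite ?dist_xx ?mul0r ?mulr1.
  rewrite -upbR !mulr_sumr -big_split /=; apply: eq_bigr => C _.
  by rewrite -mulrDr addrA.
under eq_bigr do rewrite E.
rewrite exch /lambdaG; apply: eq_bigr => C bC; exact: pbd.
Qed.

Definition Lt (u y : T) : R := \sum_(C : {set T} | (is_block e C && (u \in C)) && (y \in C))
  ((u == y)%:R - (#|C|%:R)^-1).

Lemma ld u w : \sum_y Lt u y * (dist e y w)%:R = betaG e R u - (u == w)%:R.
Proof.
rewrite /Lt; under eq_bigr do rewrite mulr_suml.
rewrite exch.
have E : forall C : {set T}, is_block e C && (u \in C) ->
   \sum_(y in C) ((u == y)%:R - (#|C|%:R)^-1) * (dist e y w)%:R
   = (par w C u)%:R + (#|C|%:R)^-1 - 1 :> R.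
  move=> C /andP[bC uC]; rewrite -(pbl w bC uC).
  under eq_bigr do rewrite mulrBl.
  rewrite sumrB (bigD1 u) //= eqxx mul1r big1 ?addr0; last first.
    by move=> y /andP[_ nyu]; rewrite eq_sym (negbTE nyu) mul0r.
  rewrite -mulr_sumr dist_sym mulrC; congr (_ - _ * _).
  by apply: eq_bigr => y _; rewrite dist_sym.
rewrite (eq_bigr _ E) big_split /= big_split /= upbR.
rewrite beta_alt sumrB -sumrN.
by case: (eqVneq u w) => [->|nuw] /=; ring.
Qed.


Lemma lam_gt0 : (1 < #|T|)%N -> 0 < lambdaG e R.
Proof.
case/card_gt1P => x [y [_ _ nxy]].
have [C0 b0 /andP[y0 /existsP[c /andP[cC lt]]]] := upb_ex nxy.
have ncy : c != y by apply: contraTneq lt => ->; rewrite ltnn.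
have n2 : (1 < #|C0|)%N by apply/card_gt1P; exists c, y.
rewrite /lambdaG (bigD1 C0) //=; apply: ltr_pwDl.
  apply: divr_gt0; last by rewrite ltr0n ltnW.
  by rewrite subr_gt0 ltr1n.
apply: sumr_ge0 => C /andP[bC _]; apply: divr_ge0; last exact: ler0n.
rewrite subr_ge0 ler1n lt0n; apply/negP => /eqP/cards0_eq C00.
by move: (block_ne bC); rewrite C00 eqxx.
Qed.

Lemma inv_ident u w : (1 < #|T|)%N ->
  \sum_y (- Lt u y + betaG e R u * betaG e R y / lambdaG e R) * (dist e y w)%:R
  = (u == w)%:R.
Proof.
move=> n2; have l0 : lambdaG e R != 0 by rewrite gt_eqF ?lam_gt0.
under eq_bigr do rewrite mulrDl mulNr.
rewrite big_split /= sumrN ld.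
have -> : \sum_y betaG e R u * betaG e R y / lambdaG e R * (dist e y w)%:R
    = betaG e R u / lambdaG e R * \sum_y (dist e w y)%:R * betaG e R y.
  rewrite mulr_sumr; apply: eq_bigr => y _; rewrite dist_sym.
  by ring.
rewrite dbeta divfK //.
by rewrite opprB addrNK.
Qed.

Lemma dist_inj (z : T -> R) : (1 < #|T|)%N ->
  (forall y, \sum_w (dist e y w)%:R * z w = 0) -> forall u, z u = 0.
Proof.
move=> n2 hz u.
have -> : z u = \sum_w (u == w)%:R * z w.
  rewrite (bigD1 u) //= eqxx mul1r big1 ?addr0 // => w nwu.
  by rewrite eq_sym (negbTE nwu) mul0r.
under eq_bigr do rewrite -(inv_ident u _ n2) mulr_suml.
rewrite exchange_big /= big1 // => y _.
rewrite (eq_bigr (fun w => (- Lt u y + betaG e R u * betaG e R y / lambdaG e R) *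
   ((dist e y w)%:R * z w))); last by move=> w _; rewrite mulrA.
by rewrite -mulr_sumr hz mulr0.
Qed.


Lemma mulD (K : 'cV[R]_#|T|) i :
  (distmx e R *m K) i 0 = \sum_y (dist e (enum_val i) y)%:R * K (enum_rank y) 0.
Proof.
rewrite !mxE (reindex enum_rank) /=; last by exists enum_val => y _; rewrite ?enum_valK ?enum_rankK.
by apply: eq_bigr => y _; rewrite !mxE enum_rankK.
Qed.

Lemma main_sec (n_ge2 : (2 <= #|T|)%N) :
  (exists! K : 'cV[R]_#|T|, distmx e R *m K = const_mx (#|T|%:R)) /\
  (forall K : 'cV[R]_#|T|, distmx e R *m K = const_mx (#|T|%:R) ->
     forall i : 'I_#|T|,
       K i 0 = #|T|%:R * betaG e R (enum_val i) / lambdaG e R).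
Proof.
have l0 : lambdaG e R != 0 by rewrite gt_eqF ?lam_gt0.
pose K0 : 'cV[R]_#|T| := \col_i (#|T|%:R * betaG e R (enum_val i) / lambdaG e R).
have HK0 : distmx e R *m K0 = const_mx (#|T|%:R).
  apply/matrixP => i j; rewrite ord1 mulD [RHS]mxE.
  under eq_bigr do rewrite mxE enum_rankK.
  rewrite (eq_bigr (fun y => #|T|%:R / lambdaG e R * ((dist e (enum_val i) y)%:R * betaG e R y))).
    by rewrite -mulr_sumr dbeta divfK.
  by move=> y _; ring.
have U : forall K, distmx e R *m K = const_mx (#|T|%:R) -> K = K0.
  move=> K HK; apply/matrixP => i j; rewrite ord1.
  pose z y := K (enum_rank y) 0 - K0 (enum_rank y) 0.
  suff hz : forall y, \sum_w (dist e y w)%:R * z w = 0.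
    have := @dist_inj z n_ge2 hz (enum_val i); rewrite /z enum_valK => /eqP.
    by rewrite subr_eq0 => /eqP.
  move=> y; have h1 := mulD K (enum_rank y); have h2 := mulD K0 (enum_rank y).
  rewrite HK mxE enum_rankK in h1; rewrite HK0 mxE enum_rankK in h2.
  under eq_bigr do rewrite mulrBr.
  by rewrite sumrB -h1 -h2 subrr.
split.
  exists K0; split => // K HK; exact: esym (U K HK).
by move=> K HK i; rewrite (U K HK) mxE.
Qed.

End Dist.

Local Open Scope ring_scope.

Theorem mainTheorem1 (R : realFieldType) (T : finType) (e : rel T)
  (e_sym : symmetric e) (e_irr : irreflexive e)
  (e_conn : connected_graph e) (e_block : block_graph e)
  (n_ge2 : (2 <= #|T|)%N) :
  (exists! K : 'cV[R]_#|T|, distmx e R *m K = const_mx (#|T|%:R)) /\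
  (forall K : 'cV[R]_#|T|, distmx e R *m K = const_mx (#|T|%:R) ->
     forall i : 'I_#|T|,
       K i 0 = #|T|%:R * betaG e R (enum_val i) / lambdaG e R).
Proof. exact: (@main_sec T e e_sym e_irr e_conn e_block R n_ge2). Qed.
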